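(* Let $C$ be a linear completely regular $[n,k,2]_q$ code with covering radius $\rho=1$, and let $n_a$ be the number of codewords at distance $1$ from any vector ${\bf x}\notin C$. Then the following are equivalent: (i) for any pair of distinct coordinate positions $i,j$ there exists a codeword of weight $2$ with support $\{i,j\}$; (ii) $n_a=n$; (iii) $|C|=q^{n-1}$; (iv) $C$ has a generator matrix of the form $[I\,|\,{\bf h}]$, where $I$ is the $(n-1)\times(n-1)$ identity matrix and ${\bf h}\in\mathbb{F}_q^{n-1}$ is a column vector of weight $n-1$; (v) the dual code of $C$ is linearly equivalent to the repetition $[n,1,n]_q$ code.
   Context: Hamming distance and weight; support of a vector = set of its nonzero coordinates; covering radius $\rho=\max_{\bf v}\min_{{\bf x}\in C}d({\bf v},{\bf x})$. $C$ is completely regular if for every vector ${\bf x}$, with $t=d({\bf x},C)$, the number of codewords at distance $i$ from ${\bf x}$ depends only on $t$ and $i$ (so $n_a$ is well defined). The repetition code is $\{(c,\dots,c):c\in\mathbb{F}_q\}$. Linear equivalence means image under ${\bf x}\mapsto{\bf x}M$ with $M$ monomial. *)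

(* Defs.v *)
From HB Require Import structures.
From mathcomp Require Import all_boot all_order all_algebra all_field.
Set Implicit Arguments. Unset Strict Implicit. Unset Printing Implicit Defensive.
Import GRing.Theory.
Local Open Scope ring_scope.

Section Codes.
Variables (F : finFieldType) (n : nat).
Implicit Types (x y c : 'rV[F]_n) (C : {set 'rV[F]_n}).

Definition supp x : {set 'I_n} := [set i | x 0 i != 0].
Definition wt x : nat := #|supp x|.
Definition hdist x y : nat := #|[set i | x 0 i != y 0 i]|.

Definition linear_code C : Prop :=
  (0 : 'rV[F]_n) \in C /\ forall (a : F) x y, x \in C -> y \in C -> a *: x + y \in C.

(* minimum distance d (of a linear code: minimum nonzero weight) *)
Definition min_dist C (d : nat) : Prop :=
  (exists2 c, c \in C & (c != 0) && (wt c == d)) /\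
  (forall c, c \in C -> c != 0 -> (d <= wt c)%N).

Definition dist_to x C (t : nat) : Prop :=
  (exists2 c, c \in C & hdist x c = t) /\ (forall c, c \in C -> (t <= hdist x c)%N).

Definition covering_radius C (r : nat) : Prop :=
  (forall v, exists2 c, c \in C & (hdist v c <= r)%N) /\
  (exists v, forall c, c \in C -> (r <= hdist v c)%N).

Definition nb_at C x (i : nat) : nat := #|[set c in C | hdist x c == i]|.

Definition completely_regular C : Prop :=
  forall x y (t : nat), dist_to x C t -> dist_to y C t ->
    forall i, nb_at C x i = nb_at C y i.

Definition dual_code C : {set 'rV[F]_n} :=
  [set y | [forall c in C, c *m y^T == 0]].

Definition repetition_code : {set 'rV[F]_n} :=
  [set (\row_(j < n) a) | a : F].

Definition monomial (M : 'M[F]_n) : bool :=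
  [forall i, #|[set j | M i j != 0]| == 1%N] &&
  [forall j, #|[set i | M i j != 0]| == 1%N].

Definition lin_equiv (C D : {set 'rV[F]_n}) : Prop :=
  exists2 M : 'M[F]_n, monomial M & D = [set x *m M | x in C].

(* the (n-1) x n matrix [I | h] *)
Definition std_gen (h : 'cV[F]_n.-1) : 'M[F]_(n.-1, n) :=
  \matrix_(i < n.-1, j < n) (if (j < n.-1)%N then ((i : nat) == j)%:R else h i 0).

Definition generated_by m (G : 'M[F]_(m, n)) C : Prop :=
  C = [set u *m G | u : 'rV[F]_m].

End Codes.

(* Main.v *)
Require Import Defs.
From mathcomp Require Import all_boot all_order all_algebra all_field.
From mathcomp Require mxabelem.
Import GRing.Theory.
Local Open Scope ring_scope.
Set Implicit Arguments. Unset Strict Implicit. Unset Printing Implicit Defensive.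


Definition ev (F : finFieldType) n (p : 'I_n) : 'rV[F]_n := \row_j ((j == p)%:R).

Lemma lc_add (F : finFieldType) n (C : {set 'rV[F]_n}) : linear_code C ->
  forall x y, x \in C -> y \in C -> x + y \in C.
Proof. by move=> [_ H] x y Hx Hy; rewrite -(scale1r x); apply: H. Qed.

Lemma lc_scale (F : finFieldType) n (C : {set 'rV[F]_n}) : linear_code C ->
  forall a x, x \in C -> a *: x \in C.
Proof. by move=> [H0 H] a x Hx; rewrite -(addr0 (a *: x)); apply: H. Qed.

Lemma lc_sub (F : finFieldType) n (C : {set 'rV[F]_n}) : linear_code C ->
  forall x y, x \in C -> y \in C -> x - y \in C.
Proof.
move=> L x y Hx Hy; apply: lc_add => //.
by rewrite -scaleN1r; apply: lc_scale.
Qed.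

Lemma lc_sum (F : finFieldType) n (C : {set 'rV[F]_n}) : linear_code C ->
  forall m (f : 'I_m -> 'rV[F]_n), (forall i, f i \in C) -> \sum_i f i \in C.
Proof.
move=> L m f Hf; apply: (big_ind (fun v => v \in C)) => //.
- by case: L.
- by move=> x y; apply: lc_add.
Qed.

Definition noweak (F : finFieldType) n (C : {set 'rV[F]_n}) :=
  forall v (k : 'I_n), v \in C -> (forall i, i != k -> v 0 i = 0) -> v = 0.

Lemma md_noweak (F : finFieldType) n (C : {set 'rV[F]_n}) : min_dist C 2 -> noweak C.
Proof.
move=> [_ H] v k Hv Hk; apply/eqP; apply: contraT => Hv0.
have := H v Hv Hv0; rewrite /wt.
have : supp v \subset [set k].
  apply/subsetP => i; rewrite !inE; apply: contraR => Hik.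
  by apply/eqP; apply: Hk.
by move/subset_leq_card; rewrite cards1 => H1 H2; have := leq_trans H2 H1.
Qed.

Lemma noweak2 (F : finFieldType) n (C : {set 'rV[F]_n}) : linear_code C -> noweak C ->
  forall c c' (k : 'I_n), c \in C -> c' \in C -> (forall i, i != k -> c 0 i = c' 0 i) -> c = c'.
Proof.
move=> L N c c' k Hc Hc' H; apply/eqP; rewrite -subr_eq0; apply/eqP.
apply: (N _ k); first exact: lc_sub.
by move=> i /H; rewrite !mxE => ->; rewrite subrr.
Qed.

Lemma noweak_ev (F : finFieldType) n (C : {set 'rV[F]_n}) : linear_code C -> noweak C ->
  forall b (p : 'I_n), b *: ev F p \in C -> b = 0.
Proof.
move=> L N b p H; have := N _ p H.
have: forall i, i != p -> (b *: ev F p) 0 i = 0.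
  by move=> i Hi; rewrite !mxE (negPf Hi) mulr0.
move=> Hi /(_ Hi)/matrixP/(_ 0 p); rewrite !mxE eqxx mulr1 => ->.
done.
Qed.


Definition hubK (F : finFieldType) n (C : {set 'rV[F]_n}) :=
  forall (x : 'rV[F]_n) (p : 'I_n), exists b : F, x - b *: ev F p \in C.

Lemma P1_K (F : finFieldType) n (C : {set 'rV[F]_n}) : linear_code C ->
  (forall i j : 'I_n, i != j -> exists2 c, c \in C & supp c = [set i; j]) -> hubK C.
Proof.
move=> L H1 x p.
suff: forall m (x : 'rV[F]_n), leq #|[set i | (x 0 i != 0) && (i != p)]| m ->
  exists b : F, x - b *: ev F p \in C by apply; apply: leqnn.
elim=> [|m IH] {}x Hm.
- exists (x 0 p); suff Ex : x = x 0 p *: ev F p by rewrite {1}Ex subrr; case: L.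
  apply/matrixP => i j; rewrite !mxE (ord1 i).
  case: (eqVneq j p) => [->|Hjp]; first by rewrite mulr1.
  rewrite mulr0; apply/eqP; apply: contraTT Hm => Hx.
  by rewrite -ltnNge card_gt0; apply/set0Pn; exists j; rewrite inE Hx Hjp.
- case: (eqVneq [set i | (x 0 i != 0) && (i != p)] set0) => [S0|].
    by apply: IH; rewrite S0 cards0.
  move/set0Pn => [j]; rewrite inE => /andP [Hxj Hjp].
  have [c Hc Sc] := H1 j p Hjp.
  have cj : c 0 j != 0.
    have : j \in supp c by rewrite Sc !inE eqxx.
    by rewrite inE.
  have ck : forall k, k != j -> k != p -> c 0 k = 0.
    move=> k Hkj Hkp; apply/eqP; apply: contraNT Hkj => Hck.
    have : k \in supp c by rewrite inE.
    by rewrite Sc !inE (negPf Hkp) orbF.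
  set t := x 0 j / c 0 j.
  have Hlt : leq #|[set i | ((x - t *: c) 0 i != 0) && (i != p)]| m.
    rewrite -ltnS; apply: leq_trans Hm; apply: proper_card; apply/properP; split.
      apply/subsetP => k; rewrite !inE !mxE => /andP [Hk Hkp]; rewrite Hkp andbT.
      case: (eqVneq k j) => [Ekj|Hkj].
        by move: Hk; rewrite Ekj /t divfK // subrr eqxx.
      by move: Hk; rewrite ck // mulr0 subr0.
    exists j; first by rewrite inE Hxj Hjp.
    by rewrite inE !mxE /t divfK // subrr eqxx.
  have [b Hb] := IH _ Hlt.
  exists b; have -> : x - b *: ev F p = (x - t *: c - b *: ev F p) + t *: c.
    by rewrite addrAC subrK.
  by apply: lc_add => //; apply: lc_scale.
Qed.


Definition bK (F : finFieldType) n (C : {set 'rV[F]_n}) x p : F :=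
  odflt 0 [pick b | x - b *: ev F p \in C].

Lemma bKP (F : finFieldType) n (C : {set 'rV[F]_n}) : hubK C ->
  forall x p, x - bK C x p *: ev F p \in C.
Proof.
move=> K x p; rewrite /bK; case: pickP => [b //|H].
by have [b Hb] := K x p; move: (H b); rewrite Hb.
Qed.

Lemma ev_notin (F : finFieldType) n (C : {set 'rV[F]_n}) : linear_code C -> noweak C ->
  forall p, ev F p \notin C.
Proof.
move=> L N p; apply/negP => H.
have := noweak_ev L N (b := 1) (p := p); rewrite scale1r => /(_ H)/eqP.
by rewrite oner_eq0.
Qed.

Lemma bK_neq0 (F : finFieldType) n (C : {set 'rV[F]_n}) : linear_code C -> noweak C ->
  hubK C -> forall x p, x \notin C -> bK C x p != 0.
Proof.
move=> L N K x p Hx; apply: contra Hx => /eqP H0.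
by have := bKP K x p; rewrite H0 scale0r subr0.
Qed.

Lemma K_P1 (F : finFieldType) n (C : {set 'rV[F]_n}) : linear_code C -> noweak C ->
  hubK C -> (forall i j : 'I_n, i != j -> exists2 c, c \in C & supp c = [set i; j]).
Proof.
move=> L N K i j Hij; exists (ev F i - bK C (ev F i) j *: ev F j); first exact: bKP.
have Hb := bK_neq0 L N K j (ev_notin L N i).
apply/setP => k; rewrite !inE !mxE.
case: (eqVneq k i) => [->|Hki].
  by rewrite (negPf Hij) mulr0 subr0 oner_eq0.
case: (eqVneq k j) => [_|Hkj] /=; first by rewrite mulr1 sub0r oppr_eq0 Hb.
by rewrite mulr0 subr0 eqxx.
Qed.


Lemma neq_sub (F : finFieldType) (x y : F) : (x != x - y) = (y != 0).
Proof. by rewrite eq_sym subr_eq -{1}(addr0 x) (inj_eq (addrI x)) eq_sym. Qed.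

Lemma hdist_ev (F : finFieldType) n (x : 'rV[F]_n) b p : b != 0 ->
  [set i | x 0 i != (x - b *: ev F p) 0 i] = [set p].
Proof.
move=> Hb; apply/setP => i; rewrite !inE !mxE neq_sub.
by case: (eqVneq i p) => _; rewrite ?mulr1 ?mulr0 ?eqxx.
Qed.

Lemma K_P2 (F : finFieldType) n (C : {set 'rV[F]_n}) : linear_code C -> noweak C ->
  hubK C -> (forall x : 'rV[F]_n, x \notin C -> nb_at C x 1 = n).
Proof.
move=> L N K x Hx; rewrite /nb_at.
pose f p := x - bK C x p *: ev F p.
have Hf : injective f.
  move=> p q Hpq; apply/eqP; apply: contraT => Hne.
  move/matrixP: Hpq => /(_ 0 p); rewrite !mxE eqxx (negPf Hne) mulr0 subr0 mulr1.
  move/eqP; rewrite eq_sym -subr_eq0 opprB addrC subrK => /eqP H0.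
  by have := bK_neq0 L N K p Hx; rewrite H0 eqxx.
suff -> : [set c in C | hdist x c == 1%N] = f @: setT.
  by rewrite card_imset // cardsT card_ord.
apply/setP => c; apply/idP/idP.
- rewrite inE => /andP [Hc]; rewrite /hdist => /cards1P [k Hk].
  apply/imsetP; exists k; first by [].
  apply: (noweak2 L N (k := k)) => //; first exact: bKP.
  move=> i Hik; rewrite /f !mxE (negPf Hik) mulr0 subr0.
  apply/eqP; apply: contraT => Hne.
  have : i \in [set i | x 0 i != c 0 i] by rewrite inE eq_sym.
  by rewrite Hk inE (negPf Hik).
- move/imsetP => [p _ ->]; rewrite inE bKP //=.
  by rewrite /hdist /f hdist_ev ?cards1 // bK_neq0.
Qed.


Lemma D1_eq (F : finFieldType) n (x c : 'rV[F]_n) k :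
  [set i | x 0 i != c 0 i] = [set k] -> forall i, i != k -> c 0 i = x 0 i.
Proof.
move=> Hk i Hik; apply/eqP; apply: contraT => Hne.
have : i \in [set i | x 0 i != c 0 i] by rewrite inE eq_sym.
by rewrite Hk inE (negPf Hik).
Qed.

Lemma P2_P1 (F : finFieldType) n (C : {set 'rV[F]_n}) : linear_code C -> noweak C ->
  (forall x : 'rV[F]_n, x \notin C -> nb_at C x 1 = n) ->
  (forall i j : 'I_n, i != j -> exists2 c, c \in C & supp c = [set i; j]).
Proof.
move=> L N H2 i j Hij.
pose x := ev F i.
have Hn := H2 x (ev_notin L N i); rewrite /nb_at in Hn.
set S := [set c in C | hdist x c == 1%N] in Hn.
pose g (c : 'rV[F]_n) := odflt j [pick k | x 0 k != c 0 k].
have Hg : forall (c : 'rV[F]_n) k, [set i | x 0 i != c 0 i] = [set k] -> g c = k.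
  move=> c k Hk; rewrite /g; case: pickP => [k' Hk'|H].
    have : k' \in [set i | x 0 i != c 0 i] by rewrite inE.
    by rewrite Hk inE => /eqP.
  have : k \in [set i | x 0 i != c 0 i] by rewrite Hk inE.
  by rewrite inE H.
have HS : forall c, c \in S -> exists k, [set i | x 0 i != c 0 i] = [set k].
  by move=> c; rewrite inE => /andP [_ /cards1P].
have Hinj : {in S &, injective g}.
  move=> c1 c2 H1 H2'; have [k1 E1] := HS _ H1; have [k2 E2] := HS _ H2'.
  rewrite (Hg _ _ E1) (Hg _ _ E2) => E12; subst k2.
  move: H1 H2'; rewrite !inE => /andP [C1 _] /andP [C2 _].
  apply: (noweak2 L N (k := k1)) => // l Hl.
  by rewrite (D1_eq E1 Hl) (D1_eq E2 Hl).
have Himg : g @: S = setT.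
  apply/eqP; rewrite eqEcard subsetT /= cardsT card_ord card_in_imset //.
  by rewrite Hn.
have : j \in g @: S by rewrite Himg inE.
move/imsetP => [c Hc Ej].
have [k Ek] := HS _ Hc; move: (Hg _ _ Ek); rewrite -Ej => Egk.
rewrite -Egk in Ek.
exists c; first by move: Hc; rewrite inE => /andP [].
apply/setP => l; rewrite !inE.
case: (eqVneq l j) => [->|Hlj]; last first.
  rewrite (D1_eq Ek Hlj) /x mxE orbF.
  by case: (eqVneq l i) => _; rewrite ?oner_eq0 ?eqxx.
rewrite orbT.
have : j \in [set i | x 0 i != c 0 i] by rewrite Ek inE.
by rewrite inE /x mxE (eq_sym j i) (negPf Hij) eq_sym.
Qed.


Lemma card_phi (F : finFieldType) n (C : {set 'rV[F]_n}) (p : 'I_n) : linear_code C -> noweak C ->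
  #|[set cb.1 + cb.2 *: ev F p | cb in setX C [set: F]]| = (#|C| * #|F|)%N.
Proof.
move=> L N; rewrite card_in_imset ?cardsX ?cardsT //.
move=> [c1 b1] [c2 b2]; rewrite !inE /= => /andP [H1 _] /andP [H2 _] E.
have Ec : c1 = c2.
  apply: (noweak2 L N (k := p)) => // i Hi.
  by move/matrixP: E => /(_ 0 i); rewrite !mxE (negPf Hi) !mulr0 !addr0.
subst c2; move/addrI/matrixP: E => /(_ 0 p); rewrite !mxE eqxx !mulr1 => ->.
done.
Qed.

Lemma q_pred (F : finFieldType) n : (0 < n)%N -> (#|F| ^ n = #|F| ^ n.-1 * #|F|)%N.
Proof. by move=> Hn; rewrite -expnSr prednK. Qed.

Lemma K_P3 (F : finFieldType) n (C : {set 'rV[F]_n}) (p : 'I_n) : linear_code C -> noweak C ->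
  hubK C -> #|C| = (#|F| ^ n.-1)%N.
Proof.
move=> L N K.
have Hn : (0 < n)%N by case: n p {C L N K} => [[]|].
have E : [set cb.1 + cb.2 *: ev F p | cb in setX C [set: F]] = setT.
  apply/setP => x; rewrite inE; apply/imsetP; exists (x - bK C x p *: ev F p, bK C x p).
    by rewrite !inE bKP.
  by rewrite /= subrK.
have q0 : (0 < #|F|)%N by apply/card_gt0P; exists 0.
have := card_phi p L N; rewrite E cardsT card_mx mul1n (q_pred F Hn) => /eqP.
by rewrite eq_sym eqn_pmul2r // => /eqP.
Qed.

Lemma P3_K (F : finFieldType) n (C : {set 'rV[F]_n}) : linear_code C -> noweak C ->
  #|C| = (#|F| ^ n.-1)%N -> hubK C.
Proof.
move=> L N H3 x p.
have Hn : (0 < n)%N by case: n p {C L N H3 x} => [[]|].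
have E : [set cb.1 + cb.2 *: ev F p | cb in setX C [set: F]] = setT.
  by apply/eqP; rewrite eqEcard subsetT /= card_phi // cardsT card_mx mul1n H3 (q_pred F Hn).
have : x \in [set cb.1 + cb.2 *: ev F p | cb in setX C [set: F]] by rewrite E inE.
move/imsetP => [[c b]]; rewrite !inE /= => /andP [Hc _] ->.
by exists b; rewrite addrK.
Qed.


Lemma std_gen_mul (F : finFieldType) n (u : 'rV[F]_n.-1) h (j : 'I_n) (Hj : (j < n.-1)%N) :
  (u *m std_gen h) 0 j = u 0 (Ordinal Hj).
Proof.
rewrite !mxE (bigD1 (Ordinal Hj)) //= big1 ?addr0.
  by rewrite !mxE Hj eqxx mulr1.
move=> i Hi; rewrite !mxE Hj.
have -> : ((i : nat) == j) = false.
  by apply/negP => /eqP E; move: Hi; rewrite (_ : i = Ordinal Hj) ?eqxx //; apply: val_inj.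
by rewrite mulr0.
Qed.

Lemma std_gen_inj (F : finFieldType) n (h : 'cV[F]_n.-1) :
  injective (fun u : 'rV[F]_n.-1 => u *m std_gen h).
Proof.
move=> u v E; apply/matrixP => a i. rewrite (ord1 a).
have Hi : (widen_ord (leq_pred n) i < n.-1)%N by exact: ltn_ord i.
move/matrixP: E => /(_ 0 (widen_ord (leq_pred n) i)).
by rewrite !(std_gen_mul _ _ Hi) (_ : Ordinal Hi = i) //; apply: val_inj.
Qed.

Lemma P4_P3 (F : finFieldType) n (C : {set 'rV[F]_n}) :
  (exists2 h : 'cV[F]_n.-1, wt (h^T) = n.-1 & generated_by (std_gen h) C) ->
  #|C| = (#|F| ^ n.-1)%N.
Proof.
move=> [h _ ->]; rewrite card_imset; last exact: std_gen_inj.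
by rewrite card_mx mul1n.
Qed.


Lemma K_P4 (F : finFieldType) n (C : {set 'rV[F]_n}) : (0 < n)%N -> linear_code C -> noweak C ->
  hubK C -> 
  (exists2 h : 'cV[F]_n.-1, wt (h^T) = n.-1 & generated_by (std_gen h) C).
Proof.
move=> Hn L N K.
have Hl : (n.-1 < n)%N by rewrite ltn_predL.
pose lst := Ordinal Hl.
pose wd (i : 'I_n.-1) := widen_ord (leq_pred n) i.
pose h := \col_i (- bK C (ev F (wd i)) lst).
have Hrow : forall i, row i (std_gen h) = ev F (wd i) - bK C (ev F (wd i)) lst *: ev F lst.
  move=> i; apply/matrixP => a j; rewrite !mxE.
  case: ifP => Hj.
    have -> : (j == lst) = false.
      by apply/negP => /eqP E; move: Hj; rewrite E /= ltnn.
    rewrite mulr0 subr0.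
    by congr (_ %:R); rewrite eq_sym.
  have Ej : j = lst.
    by apply: val_inj => /=; apply/eqP; rewrite eqn_leq -ltnS prednK // ltn_ord leqNgt Hj.
  rewrite Ej eqxx mulr1.
  have -> : (lst == wd i) = false.
    by apply/negP => /eqP/(congr1 val) /= E; move: (ltn_ord i); rewrite -E ltnn.
  by rewrite sub0r.
exists h.
  rewrite /wt (_ : supp h^T = setT) ?cardsT ?card_ord //.
  apply/setP => i; rewrite !inE !mxE oppr_eq0 bK_neq0 //.
  exact: ev_notin.
apply/setP => c; apply/idP/imsetP => [Hc|[u _ ->]].
- exists (\row_i c 0 (wd i)) => //.
  apply: (noweak2 L N (k := lst)) => //.
    rewrite mulmx_sum_row; apply: lc_sum => // i; apply: lc_scale => //.
    by rewrite Hrow bKP.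
  move=> j Hj.
  have Hj' : (j < n.-1)%N.
    by rewrite ltn_neqAle -ltnS prednK // ltn_ord andbT; apply: contra Hj => /eqP E; apply/eqP/val_inj.
  rewrite std_gen_mul mxE; congr (c 0 _); exact: val_inj.
- rewrite mulmx_sum_row; apply: lc_sum => // i; apply: lc_scale => //.
  by rewrite Hrow bKP.
Qed.


Lemma dimC (F : finFieldType) n (C : {set 'rV[F]_n}) : linear_code C ->
  (#|C| * #|dual_code C| = #|F| ^ n)%N.
Proof.
move=> L.
pose A := \matrix_(i < #|C|) (enum_val i : 'rV[F]_n).
have EC : C = mxabelem.rowg A.
  apply/setP => v; rewrite mxabelem.mem_rowg; apply/idP/idP => [Hv|/submxP [u ->]].
    rewrite -(enum_rankK_in Hv Hv) -(rowK (fun i => (enum_val i : 'rV[F]_n))).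
    exact: row_sub.
  rewrite mulmx_sum_row; apply: lc_sum => // i; apply: lc_scale => //.
  rewrite rowK; exact: enum_valP.
have ED : dual_code C = mxabelem.rowg (kermx A^T).
  apply/setP => y; rewrite mxabelem.mem_rowg sub_kermx inE.
  rewrite (_ : y *m A^T = (A *m y^T)^T); last by rewrite trmx_mul trmxK.
  rewrite trmx_eq0.
  apply/forall_inP/eqP => [H|H c Hc].
    apply/row_matrixP => i; rewrite row_mul rowK row0.
    by apply/eqP; apply: H; exact: enum_valP.
  rewrite -(enum_rankK_in Hc Hc) -(rowK (fun i => (enum_val i : 'rV[F]_n))) -row_mul H row0.
  done.
rewrite {1}EC ED !mxabelem.card_rowg mxrank_ker mxrank_tr -expnD subnKC //.
exact: rank_leq_col.
Qed.


Lemma trZ (F : finFieldType) n (a : F) (y : 'rV[F]_n) : (a *: y)^T = a *: y^T.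
Proof. by apply/matrixP => i j; rewrite !mxE. Qed.

Lemma dual_scale (F : finFieldType) n (C : {set 'rV[F]_n}) a y :
  y \in dual_code C -> a *: y \in dual_code C.
Proof.
rewrite !inE => /forall_inP H; apply/forall_inP => c Hc.
by rewrite trZ -scalemxAr (eqP (H c Hc)) scaler0.
Qed.

Lemma ev_mul (F : finFieldType) n (i : 'I_n) (z : 'rV[F]_n) :
  (ev F i *m z^T) 0 0 = z 0 i.
Proof.
rewrite !mxE (bigD1 i) //= big1 ?addr0; first by rewrite !mxE eqxx mul1r.
by move=> k Hk; rewrite !mxE (negPf Hk) mul0r.
Qed.

Lemma dual_coord (F : finFieldType) n (C : {set 'rV[F]_n}) : hubK C ->
  forall z p i, z \in dual_code C -> z 0 i = bK C (ev F i) p * z 0 p.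
Proof.
move=> K z p i; rewrite inE => /forall_inP /(_ _ (bKP K (ev F i) p)) /eqP.
move/matrixP => /(_ 0 0); rewrite mulmxBl -scalemxAl.
have E1 : forall (A B : 'M[F]_(1,1)), (A - B) 0 0 = A 0 0 - B 0 0 by move=> A B; rewrite !mxE.
have E2 : forall (a : F) (A : 'M[F]_(1,1)), (a *: A) 0 0 = a * A 0 0 by move=> a A; rewrite !mxE.
rewrite E1 E2 !ev_mul mxE => /eqP; rewrite subr_eq0 => /eqP.
done.
Qed.

Lemma monomial_inj (F : finFieldType) n (M : 'M[F]_n) : monomial M ->
  injective (fun x : 'rV[F]_n => x *m M).
Proof.
move=> /andP [/forallP HR /forallP HC] x y /= E.
apply/eqP; rewrite -subr_eq0; apply/eqP; move: E => /eqP; rewrite -subr_eq0 -mulmxBl.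
move: (x - y) => z /eqP Hz.
apply/matrixP => a i; rewrite (ord1 a) mxE.
have [j Ej] := cards1P (HR i).
have Mij : M i j != 0.
  have : j \in [set j0 | M i j0 != 0] by rewrite Ej inE.
  by rewrite inE.
have [i' Ei'] := cards1P (HC j).
have Ei : [set i0 | M i0 j != 0] = [set i].
  have : i \in [set i0 | M i0 j != 0] by rewrite inE.
  by rewrite Ei' inE => /eqP ->.
move/matrixP: Hz => /(_ 0 j); rewrite !mxE (bigD1 i) //= big1 ?addr0.
  by move/eqP; rewrite mulf_eq0 (negPf Mij) orbF => /eqP.
move=> k Hk; have : k \notin [set i0 | M i0 j != 0] by rewrite Ei inE.
by rewrite inE negbK => /eqP ->; rewrite mulr0.
Qed.

Lemma card_rep (F : finFieldType) n : (0 < n)%N -> #|@repetition_code F n| = #|F|.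
Proof.
move=> Hn; rewrite /repetition_code card_imset //.
move=> a b /matrixP /(_ 0 (Ordinal Hn)); rewrite !mxE.
done.
Qed.

Lemma P5_P3 (F : finFieldType) n (C : {set 'rV[F]_n}) : (0 < n)%N -> linear_code C ->
  lin_equiv (dual_code C) (@repetition_code F n) -> #|C| = (#|F| ^ n.-1)%N.
Proof.
move=> Hn L [M HM E].
have Hd : #|dual_code C| = #|F|.
  by rewrite -(card_rep F Hn) E card_imset //; apply: monomial_inj.
have q0 : (0 < #|F|)%N by apply/card_gt0P; exists 0.
have := dimC L; rewrite Hd (q_pred F Hn) => /eqP.
by rewrite eqn_pmul2r // => /eqP.
Qed.

Lemma P3_P5 (F : finFieldType) n (C : {set 'rV[F]_n}) : (0 < n)%N -> linear_code C -> noweak C ->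
  #|C| = (#|F| ^ n.-1)%N -> lin_equiv (dual_code C) (@repetition_code F n).
Proof.
move=> Hn L N H3.
have K := P3_K L N H3.
pose p := Ordinal Hn.
have q0 : (0 < #|F|)%N by apply/card_gt0P; exists 0.
have Hd : #|dual_code C| = #|F|.
  apply/eqP; rewrite -(@eqn_pmul2l #|C|); last by rewrite H3 expn_gt0 q0.
  by rewrite (dimC L) H3 -(q_pred F Hn).
have [y Hy Hy0] : exists2 y, y \in dual_code C & y != 0.
  apply/exists_inP; apply: contraT; rewrite negb_exists_in => /forall_inP H.
  have : dual_code C \subset [set 0].
    by apply/subsetP => z Hz; rewrite inE; move: (H z Hz); rewrite negbK.
  move/subset_leq_card; rewrite cards1 Hd.
  by rewrite leqNgt card_finNzRing_gt1.
pose w : 'rV[F]_n := \row_i (if i == p then 1 else bK C (ev F i) p).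
have Hz : forall z, z \in dual_code C -> z = z 0 p *: w.
  move=> z Hz; apply/matrixP => a i; rewrite (ord1 a) !mxE.
  case: (eqVneq i p) => [->|Hip]; first by rewrite mulr1.
  by rewrite (dual_coord K p i Hz) mulrC.
have Hyp : y 0 p != 0.
  by apply: contra Hy0 => /eqP H0; rewrite (Hz _ Hy) H0 scale0r.
have Hw : w \in dual_code C.
  have -> : w = (y 0 p)^-1 *: y by rewrite {2}(Hz _ Hy) scalerA mulVf // scale1r.
  exact: dual_scale.
have Hw0 : forall i, w 0 i != 0.
  move=> i; rewrite mxE; case: (eqVneq i p) => [_|Hip]; first exact: oner_neq0.
  exact: (bK_neq0 L N K p (ev_notin L N i)).
clearbody w.
pose M := diag_mx (\row_j (w 0 j)^-1).
have HMe : forall i j, (M i j != 0) = (i == j).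
  move=> i j; rewrite !mxE; case: (eqVneq i j) => _; last by rewrite mulr0n eqxx.
  by rewrite mulr1n invr_eq0 Hw0.
exists M.
  apply/andP; split; apply/forallP => i; apply/cards1P; exists i; apply/setP => j;
    rewrite !inE HMe //; exact: eq_sym.
have HwM : forall a : F, (a *: w) *m M = \row_(j < n) a.
  move=> a; rewrite mul_mx_diag; apply/matrixP => b j; rewrite !mxE.
  by rewrite (ord1 b) -mulrA mulfV ?mulr1.
apply/setP => v; apply/imsetP/imsetP => [[a _ ->]|[x Hx ->]].
  by exists (a *: w); [exact: dual_scale | rewrite HwM].
by exists (x 0 p) => //; rewrite {1}(Hz _ Hx) HwM.
Qed.


Unset Implicit Arguments. Set Strict Implicit.

Theorem lemma3p5 (F : finFieldType) (n k : nat) (C : {set 'rV[F]_n}) :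
  linear_code C ->
  #|C| = (#|F| ^ k)%N ->
  min_dist C 2 ->
  completely_regular C ->
  covering_radius C 1 ->
  [<-> (forall i j : 'I_n, i != j -> exists2 c, c \in C & supp c = [set i; j]);
       (forall x : 'rV[F]_n, x \notin C -> nb_at C x 1 = n);
       #|C| = (#|F| ^ n.-1)%N;
       (exists2 h : 'cV[F]_n.-1, wt (h^T) = n.-1 & generated_by (std_gen h) C);
       lin_equiv (dual_code C) (@repetition_code F n)].
Proof.
move=> L _ MD _ _.
have N := md_noweak MD.
have Hn : (0 < n)%N.
  case: MD => [[c _ /andP [_ /eqP Hw]] _].
  by have := max_card (supp c); rewrite -/(wt c) Hw card_ord => /(leq_trans _); apply.
tfae.
- by move=> H1; apply: K_P2 => //; apply: P1_K.
- by move=> H2; apply: (K_P3 (Ordinal Hn)) => //; apply: P1_K => //; apply: P2_P1.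
- by move=> H3; apply: K_P4 => //; apply: P3_K.
- by move=> H4; apply: P3_P5 => //; apply: P4_P3.
- by move=> H5; apply: K_P1 => //; apply: P3_K => //; apply: P5_P3.
Qed.
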